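(* Let $x,y$ be allocation rules of $n$-agent rank-based auctions, with bids from the all-pay auction with rule $x$. If $\delta_N\le 1/n$, then $$\int_{[0,\delta_N]\cup[1-\delta_N,1]} Z_y(q)\,b'(q)\,dq\le e\,\delta_N\,y'(\delta_N)+e\,\delta_N^2\,y'(1-\delta_N).$$
   Context: Agents have values i.i.d. from a continuous distribution $F$ on $[0,1]$; quantile $q=F(v)$, $v(q)=F^{-1}(q)$. For $k\in\{1,\dots,n-1\}$ the $k$-highest-bids-win allocation rule is $x_k(q)=\sum_{i=0}^{k-1}\binom{n-1}{i}q^{n-1-i}(1-q)^i$; $x_0\equiv0$, $x_n\equiv1$. A rank-based auction with position weights $1\ge w_1\ge\cdots\ge w_n\ge 0$ ($w_{n+1}:=0$) has allocation rule $\sum_{k=1}^{n}(w_k-w_{k+1})x_k(q)$. In the all-pay auction with rule $x$, the Bayes–Nash equilibrium bid function satisfies $b(0)=0$, $b'(q)=v(q)x'(q)$. $Z_y(q)=(1-q)\,y'(q)/x'(q)$. $\delta_N=\max(25\log\log N,n)/N$ for a sample size $N$. *)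

(* Defs.v *)
From Stdlib Require Import Reals Lra Lia.
Open Scope R_scope.

Fixpoint sumR (f : nat -> R) (m : nat) : R :=
  match m with
  | O => 0
  | S m' => sumR f m' + f m'
  end.

(* k-highest-bids-win allocation rule:
   x_k(q) = sum_{i=0}^{k-1} C(n-1,i) q^(n-1-i) (1-q)^i.
   For k = 0 this is the empty sum 0 = x_0, and for k = n it is
   (q + (1-q))^(n-1) = 1 = x_n, matching the paper's conventions. *)
Definition xk (n k : nat) (q : R) : R :=
  sumR (fun i => C (n - 1) i * q ^ (n - 1 - i) * (1 - q) ^ i) k.

Definition wext (n : nat) (w : nat -> R) (k : nat) : R :=
  if (k <=? n)%nat then w k else 0.

Definition rank_alloc (n : nat) (w : nat -> R) (q : R) : R :=
  sumR (fun j => (wext n w (S j) - wext n w (S (S j))) * xk n (S j) q) n.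

Definition valid_weights (n : nat) (w : nat -> R) : Prop :=
  w 1%nat <= 1 /\ (forall k, (1 <= k < n)%nat -> w (S k) <= w k) /\ 0 <= w n.

Definition deltaN (n N : nat) : R :=
  Rmax (25 * ln (ln (INR N))) (INR n) / INR N.

Definition is_quantile_fn (F v : R -> R) : Prop :=
  forall q, 0 <= q <= 1 ->
    0 <= v q <= 1 /\ F (v q) >= q /\
    (forall t, 0 <= t <= 1 -> F t >= q -> v q <= t).

Definition is_cont_cdf01 (F : R -> R) : Prop :=
  continuity F /\ (forall s t, s <= t -> F s <= F t) /\
  (forall t, t <= 0 -> F t = 0) /\ (forall t, 1 <= t -> F t = 1).

Definition Zy (yp xp : R -> R) (q : R) : R := (1 - q) * yp q / xp q.

(* all-pay BNE bid derivative b'(q) = v(q) x'(q) *)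
Definition bid_deriv (v xp : R -> R) (q : R) : R := v q * xp q.

Definition integrand (v xp yp : R -> R) (q : R) : R :=
  Zy yp xp q * bid_deriv v xp q.

(* Main.v *)
Require Import Defs.
From Stdlib Require Import Reals Lra Lia.
From Coquelicot Require Import Coquelicot.
Open Scope R_scope.

Definition Bt (p j : nat) (q : R) : R := Binomial.C p j * q^(p-j) * (1-q)^j.
Definition Tk (p k : nat) (q : R) : R :=
  match k with O => 0 | S j => if (j <=? p)%nat then Bt p j q else 0 end.

Lemma C_nonneg p j : 0 <= Binomial.C p j.
Proof.
  unfold Binomial.C. apply Rmult_le_pos; [apply pos_INR|].
  left; apply Rinv_0_lt_compat; apply Rmult_lt_0_compat; apply INR_fact_lt_0.
Qed.

Lemma L1 a p r : (a + S r = S p)%nat ->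
  Binomial.C (S p) a * INR (S r) = INR (S p) * Binomial.C p a.
Proof.
  intros H. unfold Binomial.C.
  replace (S p - a)%nat with (S r) by lia. replace (p - a)%nat with r by lia.
  rewrite !fact_simpl, !mult_INR.
  assert (H1 := INR_fact_neq_0 p). assert (H2 := INR_fact_neq_0 a).
  assert (H3 := INR_fact_neq_0 r). assert (H4 : INR (S r) <> 0) by (apply not_0_INR; lia).
  field. auto.
Qed.

Lemma L2 a p : (a <= p)%nat ->
  Binomial.C (S p) (S a) * INR (S a) = INR (S p) * Binomial.C p a.
Proof.
  intros H. unfold Binomial.C.
  replace (S p - S a)%nat with (p - a)%nat by lia.
  rewrite !fact_simpl, !mult_INR.
  assert (H1 := INR_fact_neq_0 p). assert (H2 := INR_fact_neq_0 a).
  assert (H3 := INR_fact_neq_0 (p-a)). assert (H4 : INR (S a) <> 0) by (apply not_0_INR; lia).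
  field. auto.
Qed.

Lemma raw_der (m k a : nat) q : is_derive (fun q => Binomial.C m k * q^a * (1-q)^k) q
  (Binomial.C m k * (INR a * q^(pred a) * (1-q)^k + q^a * (INR k * (1-q)^(pred k) * -1))).
Proof. auto_derive. auto. unfold Rminus. ring. Qed.

Lemma term_der p k q : (k <= S p)%nat ->
  is_derive (fun t => Binomial.C (S p) k * t^(S p - k) * (1-t)^k) q
    (INR (S p) * (Tk p (S k) q - Tk p k q)).
Proof.
  intros Hk. assert (H := raw_der (S p) k (S p - k) q).
  match type of H with is_derive _ _ ?l => enough (E : l = INR (S p) * (Tk p (S k) q - Tk p k q)) by (rewrite <- E; exact H) end.
  destruct k as [|k'].
  - simpl Tk. unfold Bt. rewrite !C_n_0, !Nat.sub_0_r. simpl. ring.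
  - unfold Tk. rewrite (proj2 (Nat.leb_le k' p)) by lia.
    destruct (Nat.le_gt_cases (S k') p) as [Hl|Hl].
    + rewrite (proj2 (Nat.leb_le (S k') p)) by lia. unfold Bt.
      destruct (p - k')%nat as [|r'] eqn:Hr; [lia|].
      replace (S p - S k')%nat with (S r') by lia.
      replace (p - S k')%nat with r' by lia.
      assert (E1 := L1 (S k') p r' ltac:(lia)).
      assert (E2 := L2 k' p ltac:(lia)).
      simpl pred.
      transitivity (Binomial.C (S p) (S k') * INR (S r') * (q^r' * (1-q)^(S k'))
        - Binomial.C (S p) (S k') * INR (S k') * (q^(S r') * (1-q)^k')).
      { ring. }
      rewrite E1, E2. ring.
    + assert (k' = p) by lia. subst k'.
      rewrite (proj2 (Nat.leb_gt (S p) p)) by lia. unfold Bt.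
      rewrite Nat.sub_diag. replace (S p - S p)%nat with 0%nat by lia.
      rewrite !C_n_n. rewrite !Nat.sub_diag. cbn -[INR]. change (INR 0) with 0. ring.
Qed.

Lemma dxk p q k : (k <= S (S p))%nat ->
  is_derive (xk (S (S p)) k) q (INR (S p) * Tk p k q).
Proof.
  induction k as [|k IH]; intros Hk.
  - apply (is_derive_ext (fun _ => 0)). { intros; reflexivity. }
    replace (INR (S p) * Tk p 0 q) with 0 by (simpl; ring).
    apply is_derive_Reals, derivable_pt_lim_const.
  - apply (is_derive_ext (fun t => xk (S (S p)) k t + Binomial.C (S p) k * t^(S p - k) * (1-t)^k)).
    { intros t; reflexivity. }
    replace (INR (S p) * Tk p (S k) q) with
      (plus (INR (S p) * Tk p k q) (INR (S p) * (Tk p (S k) q - Tk p k q)))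
      by (unfold plus; simpl; ring).
    apply (is_derive_plus _ (fun t => Binomial.C (S p) k * t^(S p - k) * (1-t)^k)).
    + apply IH; lia.
    + apply term_der; lia.
Qed.

Lemma sum_der (f : nat -> R -> R) (df : nat -> R) q m :
  (forall j, (j < m)%nat -> is_derive (f j) q (df j)) ->
  is_derive (fun t => sumR (fun j => f j t) m) q (sumR df m).
Proof.
  induction m as [|m IH]; intros H.
  - simpl. apply (is_derive_ext (fun _ => 0)); [intros; reflexivity|].
    apply is_derive_Reals, derivable_pt_lim_const.
  - simpl. apply (is_derive_plus (fun t => sumR (fun j => f j t) m) (f m)).
    + apply IH; intros; apply H; lia.
    + apply H; lia.
Qed.

Definition cw n w j := wext n w (S j) - wext n w (S (S j)).

Lemma drank p w q :
  is_derive (rank_alloc (S (S p)) w) q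
    (sumR (fun j => cw (S (S p)) w j * (INR (S p) * Tk p (S j) q)) (S (S p))).
Proof.
  apply (is_derive_ext (fun t => sumR (fun j => cw (S (S p)) w j * xk (S (S p)) (S j) t) (S (S p)))).
  { intros; reflexivity. }
  apply (sum_der (fun j t => cw (S (S p)) w j * xk (S (S p)) (S j) t)).
  intros j Hj. apply is_derive_scal. apply dxk. lia.
Qed.

Lemma sumR_le f g m : (forall j, (j < m)%nat -> f j <= g j) -> sumR f m <= sumR g m.
Proof. induction m; intros H; simpl; [lra|]. assert (H1 := H m ltac:(lia)).
  assert (sumR f m <= sumR g m) by (apply IHm; intros; apply H; lia). lra. Qed.

Lemma sumR_scal a g m : sumR (fun j => a * g j) m = a * sumR g m.
Proof. induction m; simpl; [ring|]. rewrite IHm; ring. Qed.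

Lemma sumR_zero m : sumR (fun _ => 0) m = 0.
Proof. induction m; simpl; [ring|]. rewrite IHm; ring. Qed.

Lemma exp_le' a b : a <= b -> exp a <= exp b.
Proof. intros [H|H]; [left; apply exp_increasing; auto | subst; lra]. Qed.

Lemma exp_pow_l a k : exp a ^ k = exp (INR k * a).
Proof. induction k; simpl pow. simpl; rewrite Rmult_0_l, exp_0; ring.
  rewrite IHk, S_INR, <- exp_plus. f_equal. ring. Qed.

Lemma keyE d j : 0 <= d -> INR (S j) * d <= 1 -> 1 <= exp 1 * (1-d)^j.
Proof.
  intros H0 H1. destruct j as [|j].
  - simpl. assert (H := exp_ineq1_le 1). lra.
  - rewrite S_INR in H1. assert (Hj := pos_INR (S j)).
    assert (Hd : d <= 1/2) by (assert (Hj0 := pos_INR j); rewrite S_INR in Hj, H1; nra).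
    set (a := d / (1 - d)).
    assert (Ha : 1 <= exp a * (1 - d)).
    { assert (H := exp_ineq1_le a). assert (E: (1 + a) * (1 - d) = 1) by (unfold a; field; lra).
      nra. }
    assert (H2 := pow_R1_Rle _ (S j) Ha). rewrite Rpow_mult_distr, exp_pow_l in H2.
    assert (H3 : INR (S j) * a <= 1).
    { unfold a. apply (Rmult_le_reg_r (1 - d)); [lra|]. field_simplify; [|lra]. lra. }
    assert (H4 := exp_le' _ _ H3).
    assert (H5 : 0 <= (1-d)^(S j)) by (apply pow_le; lra). nra.
Qed.

Lemma pow_le1 x n : 0 <= x <= 1 -> x ^ n <= 1.
Proof. intros H. rewrite <- (pow1 n). apply pow_incr. lra. Qed.

Lemma Tk_nonneg p k q : 0 <= q <= 1 -> 0 <= Tk p k q.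
Proof.
  intros Hq. destruct k; simpl; [lra|]. destruct (k <=? p)%nat; [|lra].
  unfold Bt. apply Rmult_le_pos; [apply Rmult_le_pos|]; [apply C_nonneg | apply pow_le | apply pow_le]; lra.
Qed.

Lemma Tk_near0 p k q d : 0 <= q <= d -> INR (S p) * d <= 1 -> Tk p k q <= exp 1 * Tk p k d.
Proof.
  intros Hq Hd. destruct k; simpl; [lra|]. destruct (k <=? p)%nat eqn:E; [|lra].
  apply Nat.leb_le in E. unfold Bt.
  assert (Hd1 : d <= 1) by (assert (1 <= INR (S p)) by (rewrite S_INR; assert (H := pos_INR p); lra); nra).
  assert (HC := C_nonneg p k).
  assert (A1 : q^(p-k) <= d^(p-k)) by (apply pow_incr; lra).
  assert (A2 : (1-q)^k <= 1) by (apply pow_le1; lra).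
  assert (A3 : 0 <= (1-q)^k) by (apply pow_le; lra).
  assert (A0 : 0 <= q^(p-k)) by (apply pow_le; lra).
  assert (A4 : 1 <= exp 1 * (1-d)^k).
  { apply keyE; [lra|]. assert (INR (S k) <= INR (S p)) by (apply le_INR; lia). nra. }
  assert (A5 : 0 <= Binomial.C p k * d^(p-k)) by (apply Rmult_le_pos; [auto|apply pow_le; lra]).
  apply Rle_trans with (Binomial.C p k * d^(p-k) * 1).
  - apply Rle_trans with (Binomial.C p k * d^(p-k) * (1-q)^k).
    + apply Rmult_le_compat_r; [auto|]. apply Rmult_le_compat_l; auto.
    + apply Rmult_le_compat_l; auto.
  - nra.
Qed.

Lemma Tk_near1 p k q d : 1 - d <= q <= 1 -> 0 <= d <= 1 -> INR (S p) * d <= 1 ->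
  Tk p k q <= exp 1 * Tk p k (1 - d).
Proof.
  intros Hq Hd0 Hd. destruct k; simpl; [lra|]. destruct (k <=? p)%nat eqn:E; [|lra].
  apply Nat.leb_le in E. unfold Bt.
  replace (1 - (1 - d)) with d by ring.
  assert (HC := C_nonneg p k).
  assert (A1 : (1-q)^k <= d^k) by (apply pow_incr; lra).
  assert (A2 : q^(p-k) <= 1) by (apply pow_le1; lra).
  assert (A3 : 0 <= q^(p-k)) by (apply pow_le; lra).
  assert (A0 : 0 <= (1-q)^k) by (apply pow_le; lra).
  assert (A4 : 1 <= exp 1 * (1-d)^(p-k)).
  { apply keyE; [lra|]. assert (INR (S (p-k)) <= INR (S p)) by (apply le_INR; lia). nra. }
  assert (A5 : 0 <= Binomial.C p k * d^k) by (apply Rmult_le_pos; [auto|apply pow_le; lra]).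
  apply Rle_trans with (Binomial.C p k * 1 * d^k).
  - apply Rle_trans with (Binomial.C p k * q^(p-k) * d^k).
    + apply Rmult_le_compat_l; [apply Rmult_le_pos; auto|]; auto.
    + apply Rmult_le_compat_r; [apply pow_le; lra|]. apply Rmult_le_compat_l; auto.
  - nra.
Qed.

Lemma IB v xp yp q : 0 <= q <= 1 -> 0 <= v q <= 1 -> 0 <= yp q ->
  integrand v xp yp q <= (1 - q) * yp q.
Proof.
  intros Hq Hv Hy. unfold integrand, Zy, bid_deriv.
  destruct (Req_dec (xp q) 0) as [E|E].
  - rewrite E. replace ((1 - q) * yp q / 0 * (v q * 0)) with 0 by ring. nra.
  - replace ((1 - q) * yp q / xp q * (v q * xp q)) with ((1 - q) * yp q * v q) by (field; auto).
    assert (0 <= (1 - q) * yp q) by (apply Rmult_le_pos; lra). nra.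
Qed.

Lemma final v xp yp d (Hv : forall q, 0 <= q <= 1 -> 0 <= v q <= 1) (Hd : 0 < d <= 1)
  (H0 : forall q, 0 <= q <= 1 -> 0 <= yp q)
  (Hl : forall q, 0 <= q <= d -> yp q <= exp 1 * yp d)
  (Hr : forall q, 1 - d <= q <= 1 -> yp q <= exp 1 * yp (1 - d))
  (pr1 : Riemann_integrable (integrand v xp yp) 0 d)
  (pr2 : Riemann_integrable (integrand v xp yp) (Rmax d (1 - d)) 1) :
  RiemannInt pr1 + RiemannInt pr2 <= exp 1 * d * yp d + exp 1 * d ^ 2 * yp (1 - d).
Proof.
  assert (He := exp_pos 1).
  assert (Hs : 1 - d <= Rmax d (1 - d) <= 1).
  { split; [apply Rmax_r | apply Rmax_lub; lra]. }
  assert (I1 : RiemannInt pr1 <= RiemannInt (RiemannInt_P14 0 d (exp 1 * yp d))).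
  { apply RiemannInt_P19; [lra|]. intros x Hx. unfold fct_cte.
    assert (A := IB v xp yp x ltac:(lra) (Hv x ltac:(lra)) (H0 x ltac:(lra))).
    assert (B := Hl x ltac:(lra)). assert (C := H0 x ltac:(lra)). nra. }
  rewrite RiemannInt_P15 in I1.
  assert (I2 : RiemannInt pr2 <= RiemannInt (RiemannInt_P14 (Rmax d (1 - d)) 1 (d * (exp 1 * yp (1 - d))))).
  { apply RiemannInt_P19; [lra|]. intros x Hx. unfold fct_cte.
    assert (A := IB v xp yp x ltac:(lra) (Hv x ltac:(lra)) (H0 x ltac:(lra))).
    assert (B := Hr x ltac:(lra)). assert (C := H0 x ltac:(lra)).
    assert (D : (1 - x) * yp x <= d * yp x) by nra. nra. }
  rewrite RiemannInt_P15 in I2.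
  assert (Y1 := H0 (1 - d) ltac:(lra)).
  assert (Y2 : 0 <= d * (exp 1 * yp (1 - d))) by (apply Rmult_le_pos; [lra| apply Rmult_le_pos; lra]).
  assert (Y3 : d * (exp 1 * yp (1 - d)) * (1 - Rmax d (1 - d)) <= d * (exp 1 * yp (1 - d)) * d) by
    (apply Rmult_le_compat_l; lra).
  simpl. nra.
Qed.

Lemma cw_nonneg n w j : valid_weights n w -> (j < n)%nat -> 0 <= cw n w j.
Proof.
  intros [H1 [H2 H3]] Hj. unfold cw, wext.
  rewrite (proj2 (Nat.leb_le (S j) n)) by lia.
  destruct (S (S j) <=? n)%nat eqn:E.
  - apply Nat.leb_le in E. assert (H := H2 (S j) ltac:(lia)). lra.
  - apply Nat.leb_gt in E. replace (S j) with n by lia. lra.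
Qed.

Theorem mainTheorem9
  (n N : nat) (F v : R -> R) (wx wy : nat -> R) (xp yp : R -> R)
  (hn : (1 <= n)%nat) (hN : (1 <= N)%nat)
  (hF : is_cont_cdf01 F) (hv : is_quantile_fn F v)
  (hwx : valid_weights n wx) (hwy : valid_weights n wy)
  (hxp : forall q, derivable_pt_lim (rank_alloc n wx) q (xp q))
  (hyp : forall q, derivable_pt_lim (rank_alloc n wy) q (yp q))
  (hdelta : deltaN n N <= 1 / INR n)
  (pr1 : Riemann_integrable (integrand v xp yp) 0 (deltaN n N))
  (pr2 : Riemann_integrable (integrand v xp yp)
           (Rmax (deltaN n N) (1 - deltaN n N)) 1) :
  RiemannInt pr1 + RiemannInt pr2 <=
    exp 1 * deltaN n N * yp (deltaN n N)
    + exp 1 * (deltaN n N) ^ 2 * yp (1 - deltaN n N).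
Proof.
  assert (Hn : 1 <= INR n) by (change 1 with (INR 1); apply le_INR; lia).
  assert (HN : 1 <= INR N) by (change 1 with (INR 1); apply le_INR; lia).
  assert (Hdpos : 0 < deltaN n N).
  { unfold deltaN, Rdiv. apply Rmult_lt_0_compat.
    - apply Rlt_le_trans with (INR n); [lra | apply Rmax_r].
    - apply Rinv_0_lt_compat; lra. }
  assert (Hnd : INR n * deltaN n N <= 1).
  { apply Rle_trans with (INR n * (1 / INR n)).
    - apply Rmult_le_compat_l; lra.
    - right. field. lra. }
  assert (Hd1 : deltaN n N <= 1) by nra.
  assert (Hv : forall q, 0 <= q <= 1 -> 0 <= v q <= 1) by (intros q Hq; exact (proj1 (hv q Hq))).
  assert (Hd : 0 < deltaN n N <= 1) by lra.
  destruct n as [|[|p]]; [lia| |].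
  -
    assert (Hy0 : forall q, yp q = 0).
    { intros q. apply (uniqueness_limite (rank_alloc 1 wy) q); [apply hyp|].
      apply is_derive_Reals.
      apply (is_derive_ext (fun _ => rank_alloc 1 wy 0)); [intros; reflexivity|].
      apply is_derive_Reals, derivable_pt_lim_const. }
    apply final; auto; intros; rewrite ?Hy0; lra.
  - set (d := deltaN (S (S p)) N) in *.
    set (Y := fun q => sumR (fun j => cw (S (S p)) wy j * (INR (S p) * Tk p (S j) q)) (S (S p))).
    assert (HY : forall q, yp q = Y q).
    { intros q. apply (uniqueness_limite (rank_alloc (S (S p)) wy) q); [apply hyp|].
      apply is_derive_Reals. apply drank. }
    assert (Hc : forall j, (j < S (S p))%nat -> 0 <= cw (S (S p)) wy j) by (intros; apply cw_nonneg; auto).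
    assert (Hp : 0 <= INR (S p)) by apply pos_INR.
    assert (Hpd : INR (S p) * d <= 1).
    { assert (INR (S p) <= INR (S (S p))) by (apply le_INR; lia). nra. }
    apply final; auto.
    + intros q Hq. rewrite HY. unfold Y. rewrite <- (sumR_zero (S (S p))). apply sumR_le.
      intros j Hj. assert (H1 := Hc j Hj). assert (H2 := Tk_nonneg p (S j) q Hq).
      apply Rmult_le_pos; auto. apply Rmult_le_pos; auto.
    + intros q Hq. rewrite !HY. unfold Y. rewrite <- sumR_scal. apply sumR_le.
      intros j Hj. assert (H1 := Hc j Hj). assert (H2 := Tk_near0 p (S j) q d Hq Hpd).
      assert (H3 := Tk_nonneg p (S j) q ltac:(lra)).
      assert (H4 : INR (S p) * Tk p (S j) q <= INR (S p) * (exp 1 * Tk p (S j) d)) by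
        (apply Rmult_le_compat_l; auto).
      assert (H5 : cw (S (S p)) wy j * (INR (S p) * Tk p (S j) q) <=
                   cw (S (S p)) wy j * (INR (S p) * (exp 1 * Tk p (S j) d))) by
        (apply Rmult_le_compat_l; auto).
      lra.
    + intros q Hq. rewrite !HY. unfold Y. rewrite <- sumR_scal. apply sumR_le.
      intros j Hj. assert (H1 := Hc j Hj). assert (H2 := Tk_near1 p (S j) q d Hq ltac:(lra) Hpd).
      assert (H4 : INR (S p) * Tk p (S j) q <= INR (S p) * (exp 1 * Tk p (S j) (1 - d))) by
        (apply Rmult_le_compat_l; auto).
      assert (H5 : cw (S (S p)) wy j * (INR (S p) * Tk p (S j) q) <=
                   cw (S (S p)) wy j * (INR (S p) * (exp 1 * Tk p (S j) (1 - d)))) by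
        (apply Rmult_le_compat_l; auto).
      lra.
Qed.
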